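(* For every preference profile $P$, every Pareto-optimal assignment is semi-popular, i.e. $\mathit{PO}(P)\subseteq SP(P)$.
   Context: Let $N=\{1,\dots,n\}$ be agents and $H$ a set of $n$ houses. A profile $P=(\succ_1,\dots,\succ_n)$ gives each agent a strict linear order on $H$. An assignment is a bijection $\mu:N\to H$; $M$ is the set of all assignments. Agent $x$ weakly prefers $\mu$ to $\lambda$ if $\mu(x)\succ_x\lambda(x)$ or $\mu(x)=\lambda(x)$, strictly if $\mu(x)\succ_x\lambda(x)$. $N_{\mu,\lambda}$ is the set of agents weakly preferring $\mu$ to $\lambda$; $\mu\succsim\lambda$ if $|N_{\mu,\lambda}|\ge|N_{\lambda,\mu}|$. $\mu$ Pareto-dominates $\lambda$ if all agents weakly prefer $\mu$ to $\lambda$ and some agent strictly; $\mathit{PO}(P)$ is the set of assignments not Pareto-dominated by any assignment. An assignment $\mu$ is semi-popular if $|\{\lambda\in M:\mu\succsim\lambda\}|\ge |M|/2$; $SP(P)$ is the set of semi-popular assignments. *)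

(* Defs.v *)
From mathcomp Require Import all_boot.
Set Implicit Arguments. Unset Strict Implicit. Unset Printing Implicit Defensive.

(* Agents: 'I_n.  Houses: a finite type H with #|H| = n.
   A profile assigns to each agent x a relation (P x) on H,
   read "P x h h'" = "agent x strictly prefers h to h'". *)
Definition profile (n : nat) (H : finType) := 'I_n -> rel H.

Definition strict_linear_order (H : finType) (r : rel H) : Prop :=
  [/\ irreflexive r, transitive r & (forall a b, a != b -> r a b || r b a)].

Definition is_profile n (H : finType) (P : profile n H) : Prop :=
  forall x, strict_linear_order (P x).

(* An assignment is a bijection N -> H; since #|N| = #|H| this is an
   injective finite function. *)
Definition assignments n (H : finType) : {set {ffun 'I_n -> H}} :=
  [set mu : {ffun 'I_n -> H} | injectiveb mu].

Section Pop.
Variables (n : nat) (H : finType) (P : profile n H).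

Definition weak_pref (mu la : {ffun 'I_n -> H}) (x : 'I_n) : bool :=
  P x (mu x) (la x) || (mu x == la x).

Definition strict_pref (mu la : {ffun 'I_n -> H}) (x : 'I_n) : bool :=
  P x (mu x) (la x).

Definition N_set (mu la : {ffun 'I_n -> H}) : {set 'I_n} :=
  [set x | weak_pref mu la x].

Definition pop_ge (mu la : {ffun 'I_n -> H}) : bool :=
  #|N_set la mu| <= #|N_set mu la|.

Definition pareto_dominates (mu la : {ffun 'I_n -> H}) : bool :=
  [forall x, weak_pref mu la x] && [exists x, strict_pref mu la x].

Definition PO : {set {ffun 'I_n -> H}} :=
  [set mu in assignments n H |
     [forall la in assignments n H, ~~ pareto_dominates la mu]].

(* |{lambda in M : mu ≿ lambda}| >= |M|/2, stated without division. *)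
Definition SP : {set {ffun 'I_n -> H}} :=
  [set mu in assignments n H |
     #|assignments n H| <= 2 * #|[set la in assignments n H | pop_ge mu la]|].

End Pop.

(* Main.v *)
Require Import Defs.
From mathcomp Require Import all_boot.
From mathcomp Require Import zify fingroup perm.
Set Implicit Arguments. Unset Strict Implicit.

Lemma card_sum (T : finType) (b : pred T) :
  #|[set x | b x]| = \sum_x (b x : nat).
Proof.
rewrite -sum1_card big_mkcond /=; apply: eq_bigr => x _.
by rewrite inE; case: (b x).
Qed.

Lemma arith a1 b1 a2 b2 d : a1 + b1 = d -> a2 + b2 = d -> a1 + a2 <= d -> b1 < a1 -> a2 <= b2.
Proof. lia. Qed.

Section S.
Variables (n : nat) (H : finType) (P : profile n H).
Hypothesis cardH : #|H| = n.
Hypothesis prof : is_profile P.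

Lemma irr x h : P x h h = false.
Proof. by case: (prof x) => i _ _; apply: i. Qed.

Lemma asym x a b : P x a b -> P x b a -> False.
Proof. case: (prof x) => i t _ h1 h2. by have := t _ _ _ h1 h2; rewrite i. Qed.

Lemma tot x a b : a != b -> P x a b || P x b a.
Proof. by case: (prof x) => _ _ t; apply: t. Qed.

Lemma onto (la : {ffun 'I_n -> H}) : la \in assignments n H ->
  forall h, exists y, la y = h.
Proof.
rewrite inE => /injectiveP inj h.
have := inj_card_onto inj (eq_leq _) h.
rewrite card_ord cardH => /(_ erefl) /codomP [y ->]; by exists y.
Qed.

Lemma popE (mu la : {ffun 'I_n -> H}) :
  pop_ge P mu la = (\sum_y (P y (la y) (mu y) : nat) <= \sum_y (P y (mu y) (la y) : nat)).
Proof.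
rewrite /pop_ge /N_set !card_sum.
have E : forall a b : {ffun 'I_n -> H}, \sum_y (weak_pref P a b y : nat)
   = \sum_y (P y (a y) (b y) : nat) + \sum_y (a y == b y : nat).
  move=> a b; rewrite -big_split /=; apply: eq_bigr => y _.
  rewrite /weak_pref; case: eqP => [->|]; first by rewrite irr.
  by case: (P _ _ _).
rewrite !E.
have -> : \sum_y (la y == mu y : nat) = \sum_y (mu y == la y : nat).
  by apply: eq_bigr => y _; rewrite eq_sym.
by rewrite leq_add2r.
Qed.

Variable mu : {ffun 'I_n -> H}.
Hypothesis muPO : mu \in PO P.

Lemma muM : mu \in assignments n H.
Proof. by move: muPO; rewrite inE => /andP[]. Qed.

Lemma muinj : injective mu.
Proof. by have := muM; rewrite inE => /injectiveP. Qed.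

Lemma noswap a b : P a (mu b) (mu a) -> P b (mu a) (mu b) -> False.
Proof.
move=> h1 h2.
move: muPO; rewrite inE => /andP[_ /forallP /(_ [ffun x => mu (tperm a b x)])].
move=> /implyP H0.
have inj : injectiveb [ffun x => mu (tperm a b x)].
  apply/injectiveP => x y; rewrite !ffunE => /muinj.
  exact: perm_inj.
have injM : [ffun x => mu (tperm a b x)] \in assignments n H by rewrite inE.
move/negP: (H0 injM); apply.
apply/andP; split.
  apply/forallP => x; rewrite /weak_pref ffunE.
  case: (tpermP a b x) => [->|->|_ _]; [by rewrite h1|by rewrite h2|].
  by rewrite eqxx orbT.
by apply/existsP; exists a; rewrite /strict_pref ffunE tpermL.
Qed.

Definition p (la : {ffun 'I_n -> H}) x := odflt x [pick y | la y == mu x].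

Lemma pP la : la \in assignments n H -> forall x, la (p la x) = mu x.
Proof.
move=> laM x; rewrite /p; case: pickP => [y /eqP //|].
have [y hy] := onto laM (mu x) => /(_ y); by rewrite hy eqxx.
Qed.

Lemma pinj la : la \in assignments n H -> injective (p la).
Proof. move=> laM x y e; apply: muinj; by rewrite -!(pP laM) e. Qed.

Definition g la := [ffun x => mu (p la x)].

Lemma gM la : la \in assignments n H -> g la \in assignments n H.
Proof.
move=> laM; rewrite inE; apply/injectiveP => x y; rewrite !ffunE => /muinj.
exact: pinj.
Qed.

Lemma gg la : la \in assignments n H -> g (g la) = la.
Proof.
move=> laM; apply/ffunP => x; rewrite ffunE.
set z := p (g la) x.
have h1 := pP (gM laM) x; rewrite ffunE in h1.
have h2 := muinj h1.
by rewrite -h2 pP.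
Qed.

Lemma bad_good la : la \in assignments n H -> ~~ pop_ge P mu la -> pop_ge P mu (g la).
Proof.
move=> laM; rewrite !popE -ltnNge.
rewrite (reindex_inj (pinj laM)) /=.
rewrite [X in _ < X](reindex_inj (pinj laM)) /=.
have hp : forall j, la (p la j) = mu j := pP laM.
under eq_bigr => j _ do rewrite hp.
under [X in _ < X]eq_bigr => j _ do rewrite hp.
under [X in _ -> X <= _]eq_bigr => y _ do rewrite ffunE.
under [X in _ -> _ <= X]eq_bigr => y _ do rewrite ffunE.
set q := p la.
have E1 : \sum_(x < n) (P (q x) (mu x) (mu (q x)) : nat) + \sum_(x < n) (P (q x) (mu (q x)) (mu x) : nat)
   = \sum_(x < n) (q x != x : nat).
  rewrite -big_split; apply: eq_bigr => x _ /=.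
  case: eqP => [->|ne]; first by rewrite irr.
  have nm : mu x != mu (q x) by apply/eqP => /muinj e; apply: ne.
  have := tot (q x) nm; case h1: (P _ _ _); case h2: (P _ _ _) => //.
  by case: (asym h1 h2).
have E2 : \sum_(x < n) (P x (mu (q x)) (mu x) : nat) + \sum_(x < n) (P x (mu x) (mu (q x)) : nat)
   = \sum_(x < n) (q x != x : nat).
  rewrite -big_split; apply: eq_bigr => x _ /=.
  case: eqP => [->|ne]; first by rewrite irr.
  have nm : mu (q x) != mu x by apply/eqP => /muinj e; apply: ne.
  have := tot x nm; case h1: (P _ _ _); case h2: (P _ _ _) => //.
  by case: (asym h1 h2).
have E3 : \sum_(x < n) (P (q x) (mu x) (mu (q x)) : nat) + \sum_(x < n) (P x (mu (q x)) (mu x) : nat)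
   <= \sum_(x < n) (q x != x : nat).
  rewrite -big_split; apply: leq_sum => x _ /=.
  case: eqP => [->|ne]; first by rewrite irr.
  case h1: (P _ _ _); case h2: (P _ _ _) => //.
  by case: (noswap h1 h2).
move=> h; exact: (arith E1 E2 E3 h).
Qed.

Lemma main : mu \in SP P.
Proof.
rewrite inE muM /=.
set M := assignments n H.
set G := [set la in M | pop_ge P mu la].
have <- : #|M :&: G| + #|M :\: G| = #|M| by apply: cardsID.
have -> : M :&: G = G by apply/setIidPr/subsetP => x; rewrite inE => /andP[].
suff : #|M :\: G| <= #|G| by rewrite mul2n -addnn leq_add2l.
rewrite -(@card_in_imset _ _ g (mem (M :\: G))); last first.
  move=> x y /setDP[xM _] /setDP[yM _] e.
  by rewrite -(gg xM) e gg.
apply: subset_leq_card; apply/subsetP => y /imsetP [x].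
move=> /setDP[xM xG] ->.
rewrite inE (gM xM) /=; apply: bad_good => //.
by move: xG; rewrite inE xM.
Qed.

End S.

Theorem proposition4p2 (n : nat) (H : finType) (P : profile n H) :
  #|H| = n -> is_profile P -> PO P \subset SP P.
Proof.
move=> cH pr; apply/subsetP => mu muPO; exact: main.
Qed.
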